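(* Let $P$ be a distribution on $\mathcal{X}$, $R>0$, $K>0$. Then \[ E_c(P,R,K)=\min\Big\{\sup_{0\le\rho<1}\{E_0(-\rho,0,P)+\rho R\},\ \sup_{0\le\rho<1}\{E_0(-\rho,-\rho,P)+\rho(R+K)\}\Big\}, \] where \[ E_c(P,R,K)=\min_{TV}\Big\{D(TV\|PW)+\big|R-A_{TV}-|B_{TV}-K|^{+}\big|^{+}\Big\},\qquad E_0(\rho,\eta,P)=-\log\sum_y\Big[\sum_x P(x)W^{\frac{1+\eta}{1+\rho}}(y|x)\Big]^{1+\rho}. \]
   Context: $\mathcal{X},\mathcal{Y}$ are finite alphabets and $W(y|x)$ is a conditional distribution on $\mathcal{Y}$ given $\mathcal{X}$. Logs are natural. $TV$ is a joint distribution on $\mathcal{Y}\times\mathcal{X}$ with $\mathcal{Y}$-marginal $T$ and conditional $V(x|y)$, minimized over all such distributions; $PW$ is $P(x)W(y|x)$; $D(TV\|PW)=\sum T(y)V(x|y)\log\frac{T(y)V(x|y)}{P(x)W(y|x)}$; $A_{TV}=\sum T(y)V(x|y)\log\frac{V(x|y)}{P(x)}$; $B_{TV}=\mathbb{E}_{TV}[-\log W(Y|X)]$; $|t|^{+}=\max\{0,t\}$. *)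

(* Defs.v *)
From HB Require Import structures.
From mathcomp Require Import all_boot all_order all_algebra.
From mathcomp Require Import all_classical all_reals all_analysis.
Set Implicit Arguments. Unset Strict Implicit. Unset Printing Implicit Defensive.
Import Order.TTheory GRing.Theory Num.Theory.
Local Open Scope ring_scope.
Local Open Scope classical_set_scope.

Definition is_dist (R : realType) (T : finType) (p : T -> R) : Prop :=
  (forall t, 0 <= p t) /\ \sum_(t : T) p t = 1.

Definition pospart (R : realType) (t : R) : R := Num.max 0 t.

(* Channel W : X -> Y -> R, W x y = W(y|x).  Joint distribution TV on Y x X
   given by T : Y -> R (Y-marginal) and V : Y -> X -> R, V y x = V(x|y).
   Terms with T(y)V(x|y) = 0 contribute 0 (convention 0 log(.) = 0). *)
Definition divD (R : realType) (X Y : finType) (P : X -> R) (W : X -> Y -> R)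
  (T : Y -> R) (V : Y -> X -> R) : R :=
  \sum_(y : Y) \sum_(x : X)
    (if 0 < T y * V y x then T y * V y x * ln (T y * V y x / (P x * W x y)) else 0).

Definition A_TV (R : realType) (X Y : finType) (P : X -> R)
  (T : Y -> R) (V : Y -> X -> R) : R :=
  \sum_(y : Y) \sum_(x : X)
    (if 0 < T y * V y x then T y * V y x * ln (V y x / P x) else 0).

Definition B_TV (R : realType) (X Y : finType) (W : X -> Y -> R)
  (T : Y -> R) (V : Y -> X -> R) : R :=
  \sum_(y : Y) \sum_(x : X)
    (if 0 < T y * V y x then T y * V y x * (- ln (W x y)) else 0).

(* Those TV not
   absolutely continuous w.r.t. PW have D(TV||PW) = +oo and never attain the
   minimum, so the minimum is taken over TV << PW (where all terms are finite). *)
Definition Ec (R : realType) (X Y : finType) (P : X -> R) (W : X -> Y -> R)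
  (Rt K : R) : R :=
  inf [set e : R | exists (T : Y -> R) (V : Y -> X -> R),
         [/\ is_dist T, (forall y, is_dist (V y)),
             (forall y x, P x * W x y = 0 -> T y * V y x = 0) &
             e = divD P W T V + pospart (Rt - A_TV P T V - pospart (B_TV W T V - K))]].

Definition E0 (R : realType) (X Y : finType) (P : X -> R) (W : X -> Y -> R)
  (rho eta : R) : R :=
  - ln (\sum_(y : Y) (\sum_(x : X) P x * W x y `^ ((1 + eta) / (1 + rho))) `^ (1 + rho)).

(* Main.v *)
Require Import Defs.
From HB Require Import structures.
From mathcomp Require Import all_boot all_order all_algebra.
From mathcomp Require Import all_classical all_reals all_analysis.
From mathcomp Require Import ring lra.
Import Order.TTheory GRing.Theory Num.Theory.
Import numFieldNormedType.Exports.
Local Open Scope ring_scope.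
Local Open Scope classical_set_scope.
Lemma ln_le_sub1 (R : realType) (t : R) : 0 < t -> ln t <= t - 1.
Proof.
move=> t0; have := expR_ge1Dx (ln t); rewrite lnK ?posrE //.
by rewrite lerBrDl.
Qed.

Lemma gibbs (R : realType) (I : finType) (q c : I -> R) :
  (forall i, 0 <= q i) -> \sum_i q i = 1 -> (forall i, 0 <= c i) ->
  (forall i, 0 < q i -> 0 < c i) ->
  - ln (\sum_i c i) <= \sum_i (if 0 < q i then q i * ln (q i / c i) else 0).
Proof.
move=> q0 q1 c0 qc.
have [i qi] : exists i, 0 < q i.
  apply/existsP; apply: contraT; rewrite negb_exists => /forallP H.
  have : \sum_i q i = 0.
    by apply: big1 => i _; apply/eqP; rewrite eq_le q0 andbT leNgt H.
  by rewrite q1 => /eqP; rewrite oner_eq0.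
have C0 : 0 < \sum_i c i.
  apply: (lt_le_trans (qc _ qi)).
  by rewrite (bigD1 i) //= lerDl sumr_ge0.
set C := \sum_i c i in C0 *.
have step : forall j, - q j * ln C + q j - c j / C <=
    (if 0 < q j then q j * ln (q j / c j) else 0).
  move=> j; case: ifP => qj.
    have cj := qc _ qj.
    have H := @ln_le_sub1 _ (c j / (q j * C)) ltac:(by rewrite divr_gt0 ?mulr_gt0).
    have E1 : c j / (q j * C) = (q j / c j)^-1 / C by rewrite invf_div invfM mulrA.
    rewrite E1 ln_div ?posrE ?invr_gt0 ?divr_gt0 // lnV ?posrE ?divr_gt0 // in H.
    have H2 := ler_wpM2l (ltW qj) H.
    idtac.
    have e : q j * ((q j / c j)^-1 / C) = c j / C.
      by rewrite invf_div; field; rewrite ?gt_eqF.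

    lra.
  have -> : q j = 0 by apply/eqP; rewrite eq_le q0 andbT leNgt qj.
  have := divr_ge0 (c0 j) (ltW C0); lra.
apply: le_trans (ler_sum _ (fun j _ => step j)).
rewrite !big_split /=.
have e1 : \sum_i - q i * ln C = - ln C by rewrite -mulr_suml sumrN q1 mulN1r.
have e2 : \sum_i - (c i / C) = -1 by rewrite sumrN -mulr_suml divff ?gt_eqF.
rewrite e1 q1 e2; lra.
Qed.

Lemma exists_pos {R : realType} {I : finType} {q : I -> R} :
  \sum_i q i = 1 -> exists i, 0 < q i.
Proof.
move=> q1; apply/existsP; apply: contraT; rewrite negb_exists => /forallP H.
have : \sum_i q i <= 0 by apply: sumr_le0 => i _; rewrite leNgt H.
by rewrite q1 ler10.
Qed.


Lemma pos_ge0 {R : realType} (t : R) : 0 <= pospart t.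
Proof. by rewrite /pospart le_max lexx. Qed.
Lemma pos_ge {R : realType} (t : R) : t <= pospart t.
Proof. by rewrite /pospart le_max lexx orbT. Qed.
Lemma pos_id {R : realType} (t : R) : 0 <= t -> pospart t = t.
Proof. by move=> h; rewrite /pospart max_r. Qed.
Lemma pos_0 {R : realType} (t : R) : t <= 0 -> pospart t = 0.
Proof. by move=> h; rewrite /pospart max_l. Qed.
Lemma pos_mono {R : realType} (t u : R) : t <= u -> pospart t <= pospart u.
Proof.
move=> h; case: (leP 0 t) => t0.
  by rewrite pos_id // (le_trans h (pos_ge u)).
by rewrite pos_0 ?pos_ge0 // ltW.
Qed.
Lemma pos_scale {R : realType} (r t : R) : 0 <= r <= 1 -> r * t <= pospart t.
Proof.
move=> /andP[r0 r1]; case: (leP 0 t) => t0.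
  by rewrite pos_id // ler_piMl.
by rewrite pos_0 ?mulr_ge0_le0 // ltW.
Qed.
Lemma cont_ext (R : realType) (f g : R -> R) (r0 : R) : (forall r, f r = g r) ->
  {for r0, continuous f} -> {for r0, continuous g}.
Proof. move=> e; have E : f = g by apply: funext. by case: _ / E. Qed.

Lemma cont_sum_seq (R : realType) (I : Type) (s : seq I) (f : I -> R -> R) (r0 : R) :
  (forall i, {for r0, continuous (f i)}) ->
  {for r0, continuous (fun r => \sum_(i <- s) f i r)}.
Proof.
move=> h; elim: s => [|i s IH].
  by apply: (@cont_ext _ (fun _ => 0)) => [r|]; rewrite ?big_nil //; exact: cst_continuous.
apply: (@cont_ext _ (fun r => f i r + \sum_(j <- s) f j r)) => [r|]; first by rewrite big_cons.
exact: continuousD.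
Qed.

Lemma cont_sum (R : realType) (I : finType) (f : I -> R -> R) (r0 : R) :
  (forall i, {for r0, continuous (f i)}) ->
  {for r0, continuous (fun r => \sum_i f i r)}.
Proof. exact: cont_sum_seq. Qed.

Lemma cont_if (R : realType) (b : bool) (f : R -> R) (r0 : R) :
  (b -> {for r0, continuous f}) -> {for r0, continuous (fun r => if b then f r else 0)}.
Proof. case: b => h; [exact: h | exact: cst_continuous]. Qed.

Lemma upper (R : realType) (Dv Av g : R -> R) (Rr S : R) (F : set R) :
  0 < Rr -> has_lbound F ->
  (forall r, 0 <= r < 1 -> g r <= S) ->
  (forall r, 0 <= r < 1 -> Dv r - r * Av r = g r - r * Rr) ->
  (forall r, 0 <= r < 1 -> 0 <= Av r) ->
  (forall r, 0 <= r < 1 -> {for r, continuous Av}) ->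
  (forall r, 0 <= r < 1 -> exists2 v, F v & v <= Dv r + pospart (Rr - Av r)) ->
  inf F <= S.
Proof.
move=> R0 hlb hg hD hA hc hF.
have key : forall r, 0 <= r < 1 -> inf F <= Dv r + pospart (Rr - Av r).
  by move=> r hr; have [v Fv lev] := hF r hr; apply: le_trans lev; apply: ge_inf.
have h01 : 0 <= (0 : R) < 1 by rewrite lexx ltr01.
apply/ler_addgt0Pr => eps eps0.
case: (pselect (exists r, 0 <= r < 1 /\ Rr <= Av r)) => [[r1 [hr1 hA1]] | nex].
  case: (leP Rr (Av 0)) => h0.
    apply: le_trans (key 0 h01) _.
    rewrite pos_0; last by lra.
    have := hD 0 h01; have := hg 0 h01; rewrite !mul0r; lra.
  have H1 : (0 : R) <= r1 by case/andP: hr1.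
  have H2 : {within `[0, r1], continuous Av}.
    apply: continuous_in_subspaceT => x; rewrite inE /= in_itv /= => /andP [x0 x1].
    apply: hc; rewrite x0 /=; case/andP: hr1 => _; exact: le_lt_trans.
  have H3 : Num.min (Av 0) (Av r1) <= Rr <= Num.max (Av 0) (Av r1).
    by rewrite ge_min le_max (ltW h0) hA1 /= orbT.
  have [c cin Ac] := @IVT R Av 0 r1 Rr H1 H2 H3.
  have hc1 : 0 <= c < 1.
    move: cin; rewrite in_itv /= => /andP [c0 c1]; rewrite c0 /=.
    case/andP: hr1 => _; exact: le_lt_trans.
  apply: le_trans (key c hc1) _.
  rewrite Ac subrr pos_0 // addr0.
  have := hD c hc1; have := hg c hc1; rewrite Ac; lra.
have nA : forall r, 0 <= r < 1 -> Av r < Rr.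
  move=> r hr; rewrite ltNge; apply/negP => h; apply: nex; by exists r.
set r := Num.max 0 (1 - eps / Rr).
have er : 0 < eps / Rr by rewrite divr_gt0.
have r0 : 0 <= r by rewrite /r le_max lexx.
have r1 : r < 1 by rewrite /r gt_max ltr01 /=; lra.
have hr : 0 <= r < 1 by rewrite r0 r1.
have rge : 1 - eps / Rr <= r by rewrite /r le_max lexx orbT.
apply: le_trans (key r hr) _.
rewrite pos_id; last by have := nA r hr; lra.
have e1 : (1 - r) * Rr <= eps.
  have : (1 - r) * Rr <= eps / Rr * Rr by rewrite ler_pM2r //; lra.
  by rewrite divfK // gt_eqF.
have e2 : (1 - r) * (Rr - Av r) <= (1 - r) * Rr.
  by rewrite ler_wpM2l; [|lra|have := hA r hr; lra].
have := hD r hr; have := hg r hr; lra.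
Qed.

Section Main.
Variables (R : realType) (X Y : finType) (P : X -> R) (W : X -> Y -> R).
Hypotheses (HW : forall x, is_dist (W x)) (HP : is_dist P).

Definition sp x y := 0 < P x * W x y.

Definition feas (T : Y -> R) (V : Y -> X -> R) :=
  [/\ is_dist T, (forall y, is_dist (V y)) &
      (forall y x, P x * W x y = 0 -> T y * V y x = 0)].

Definition G (T : Y -> R) (V : Y -> X -> R) (phi : Y -> X -> R) :=
  \sum_y \sum_x (if 0 < T y * V y x then T y * V y x * phi y x else 0).

Lemma G_ext T V phi psi :
  (forall y x, 0 < T y * V y x -> phi y x = psi y x) -> G T V phi = G T V psi.
Proof.
move=> h; apply: eq_bigr => y _; apply: eq_bigr => x _.
by case: ifP => // /h ->.
Qed.

Lemma G_lin T V phi psi k :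
  G T V phi + k * G T V psi = G T V (fun y x => phi y x + k * psi y x).
Proof.
rewrite /G mulr_sumr -big_split; apply: eq_bigr => y _ /=.
rewrite mulr_sumr -big_split; apply: eq_bigr => x _ /=.
case: ifP => _; [ring | by rewrite mulr0 addr0].
Qed.

Lemma PW_ge0 x y : 0 <= P x * W x y.
Proof. by rewrite mulr_ge0 //; [case: HP | case: (HW x)]. Qed.

Lemma W_le1 x y : W x y <= 1.
Proof.
case: (HW x) => W0 W1; rewrite -W1 (bigD1 y) //= lerDl sumr_ge0 //.
Qed.

Lemma feas_sp T V y x : feas T V -> 0 < T y * V y x ->
  [/\ sp x y, 0 < T y & 0 < V y x].
Proof.
case=> [[T0 _] HV HC] h.
have Vyx0 : 0 <= V y x by case: (HV y).
split.
- rewrite /sp lt_def PW_ge0 andbT; apply/eqP => /HC e.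
  by rewrite e ltxx in h.
- rewrite lt_def T0 andbT; apply/eqP => e; by rewrite e mul0r ltxx in h.
- rewrite lt_def Vyx0 andbT; apply/eqP => e; by rewrite e mulr0 ltxx in h.
Qed.
Arguments feas_sp {T V y x}.


Lemma inner T (V : Y -> X -> R) y (phi : X -> R) : 0 < T y ->
  \sum_x (if 0 < T y * V y x then T y * V y x * phi x else 0) =
  T y * \sum_x (if 0 < V y x then V y x * phi x else 0).
Proof.
move=> Ty; rewrite mulr_sumr; apply: eq_bigr => x _.
rewrite pmulr_rgt0 //; case: ifP => _; [ring | by rewrite mulr0].
Qed.

Lemma sum_if_pos (I : finType) (q : I -> R) : (forall i, 0 <= q i) ->
  \sum_i (if 0 < q i then q i else 0) = \sum_i q i.
Proof.
move=> q0; apply: eq_bigr => i _; case: ifP => // qi.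
by apply/eqP; rewrite eq_le q0 leNgt qi.
Qed.

Lemma G_const T V k : feas T V -> G T V (fun _ _ => k) = k.
Proof.
case=> [[T0 T1] HV HC].
rewrite /G (eq_bigr (fun y => k * T y)); first by rewrite -mulr_sumr T1 mulr1.
move=> y _; case: (ltP 0 (T y)) => Ty.
  rewrite inner //.
  case: (HV y) => V0 V1.
  rewrite (eq_bigr (fun x => k * (if 0 < V y x then V y x else 0))).
    by rewrite -mulr_sumr sum_if_pos // V1; ring.
  by move=> x _; case: ifP => _; [ring | by rewrite mulr0].
have -> : T y = 0 by apply/eqP; rewrite eq_le Ty T0.
rewrite mulr0 big1 // => x _; by rewrite mul0r ltxx.
Qed.

Lemma C_pos T V (c : Y -> X -> R) y : feas T V -> (forall y x, 0 <= c y x) ->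
  (forall y x, sp x y -> 0 < c y x) -> 0 < T y -> 0 < \sum_x c y x.
Proof.
move=> F c0 cp Ty; have F' := F; case: F' => [_ HV _].
case: (HV y) => V0 V1; have [x Vx] := exists_pos V1.
have [spx _ _] := feas_sp F (mulr_gt0 Ty Vx).
apply: (lt_le_trans (cp _ _ spx)).
by rewrite (bigD1 x) //= lerDl sumr_ge0.
Qed.
Arguments C_pos {T V c y}.


Definition Lf T V (c : Y -> X -> R) (a : R) :=
  G T V (fun y x => ln (T y) + a * ln (V y x / c y x)).

Lemma inner_gibbs T V (c : Y -> X -> R) y : feas T V -> (forall y x, 0 <= c y x) ->
  (forall y x, sp x y -> 0 < c y x) -> 0 < T y ->
  - ln (\sum_x c y x) <= \sum_x (if 0 < V y x then V y x * ln (V y x / c y x) else 0).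
Proof.
move=> F c0 cp Ty; have F' := F; case: F' => [_ HV _].
case: (HV y) => V0 V1; apply: gibbs => // x Vx.
by have [spx _ _] := feas_sp F (mulr_gt0 Ty Vx); apply: cp.
Qed.
Arguments inner_gibbs {T V c y}.


Lemma Lf_ge T V (c : Y -> X -> R) a : feas T V -> (forall y x, 0 <= c y x) ->
  (forall y x, sp x y -> 0 < c y x) -> 0 <= a ->
  - ln (\sum_y (\sum_x c y x) `^ a) <= Lf T V c a.
Proof.
move=> F c0 cp a0; have F' := F; case: F' => [[T0 T1] HV HC].
have step : forall y, (if 0 < T y then T y * ln (T y / (\sum_x c y x) `^ a) else 0)
   <= \sum_x (if 0 < T y * V y x then T y * V y x * (ln (T y) + a * ln (V y x / c y x)) else 0).
  move=> y; case: (ltP 0 (T y)) => Ty.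
    rewrite inner //; case: (HV y) => V0 V1.
    have Cp := C_pos F c0 cp Ty.
    have IG := inner_gibbs F c0 cp Ty.
    have E : \sum_x (if 0 < V y x then V y x * (ln (T y) + a * ln (V y x / c y x)) else 0)
       = ln (T y) + a * \sum_x (if 0 < V y x then V y x * ln (V y x / c y x) else 0).
      rewrite (eq_bigr (fun x => ln (T y) * (if 0 < V y x then V y x else 0) +
        a * (if 0 < V y x then V y x * ln (V y x / c y x) else 0))); last first.
        by move=> x _; case: ifP => _; [ring | rewrite !mulr0 addr0].
      by rewrite big_split /= -!mulr_sumr sum_if_pos // V1 mulr1.
    rewrite E.
    rewrite ln_div ?posrE ?powR_gt0 // ln_powR.
    rewrite ler_pM2l //; have := ler_wpM2l a0 IG; lra.
  have -> : T y = 0 by apply/eqP; rewrite eq_le Ty T0.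
  rewrite big1 // => x _; by rewrite mul0r ltxx.
apply: le_trans (ler_sum _ (fun y _ => step y)).
apply: gibbs => //; first by move=> y; apply: powR_ge0.
by move=> y Ty; apply: powR_gt0; apply: C_pos F c0 cp Ty.
Qed.

Lemma G_log_ge0 T V (c : Y -> X -> R) : feas T V -> (forall y x, 0 <= c y x) ->
  (forall y x, sp x y -> 0 < c y x) -> (forall y, \sum_x c y x <= 1) ->
  0 <= G T V (fun y x => ln (V y x / c y x)).
Proof.
move=> F c0 cp c1; have F' := F; case: F' => [[T0 T1] HV HC].
apply: sumr_ge0 => y _; case: (ltP 0 (T y)) => Ty.
  rewrite inner //; apply: mulr_ge0; first exact: ltW.
  apply: le_trans (inner_gibbs F c0 cp Ty).
  by rewrite oppr_ge0 ln_le0.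
have -> : T y = 0 by apply/eqP; rewrite eq_le Ty T0.
by rewrite big1 // => x _; rewrite mul0r ltxx.
Qed.

Lemma sp_pos {x y} : sp x y -> 0 < P x /\ 0 < W x y.
Proof.
rewrite /sp => h; have P0 : 0 <= P x by case: HP.
have W0 : 0 <= W x y by case: (HW x).
split; rewrite lt_def ?P0 ?W0 andbT; apply/eqP => e; move: h; by rewrite e ?mul0r ?mulr0 ltxx.
Qed.

Lemma lnM2 (a b : R) : 0 < a -> 0 < b -> ln (a * b) = ln a + ln b.
Proof. by move=> a0 b0; rewrite lnM ?posrE. Qed.
Lemma lnD2 (a b : R) : 0 < a -> 0 < b -> ln (a / b) = ln a - ln b.
Proof. by move=> a0 b0; rewrite ln_div ?posrE. Qed.

Definition c1 (rho : R) (y : Y) (x : X) := P x * W x y `^ ((1 + 0) / (1 + - rho)).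
Definition c2 (y : Y) (x : X) := P x * W x y.

Lemma divD_G T V : divD P W T V = G T V (fun y x => ln (T y * V y x / (P x * W x y))).
Proof. by []. Qed.
Lemma A_G T V : A_TV P T V = G T V (fun y x => ln (V y x / P x)).
Proof. by []. Qed.
Lemma B_G T V : B_TV W T V = G T V (fun y x => - ln (W x y)).
Proof. by []. Qed.

Lemma E1 T V rho : feas T V -> rho < 1 ->
  divD P W T V - rho * A_TV P T V = Lf T V (c1 rho) (1 - rho).
Proof.
move=> F r1; rewrite divD_G A_G -mulNr G_lin /Lf; apply: G_ext => y x h.
have [spx Ty Vx] := feas_sp F h; have [Px Wx] := sp_pos spx.
rewrite /c1.
set s := (1 + 0) / (1 + - rho).
have hs : (1 - rho) * (s * ln (W x y)) = ln (W x y).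
  rewrite /s mulrA addr0 mulrCA divff ?mulr1 //; lra.
rewrite lnD2 ?mulr_gt0 // lnM2 // lnM2 // lnD2 // lnD2 ?mulr_gt0 ?powR_gt0 //.
rewrite lnM2 ?powR_gt0 // ln_powR.
lra.
Qed.

Lemma E2 T V rho : feas T V ->
  divD P W T V - rho * (A_TV P T V + B_TV W T V) = Lf T V c2 (1 - rho).
Proof.
move=> F; rewrite divD_G A_G B_G -(mul1r (G T V (fun y x => - ln (W x y)))) G_lin.
rewrite -mulNr G_lin /Lf; apply: G_ext => y x h.
have [spx Ty Vx] := feas_sp F h; have [Px Wx] := sp_pos spx.
rewrite /c2 lnD2 ?mulr_gt0 // lnM2 // lnM2 // lnD2 // lnD2 ?mulr_gt0 // lnM2 //.
lra.
Qed.

Lemma c1_ge0 rho y x : 0 <= c1 rho y x.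
Proof. by rewrite /c1 mulr_ge0 ?powR_ge0 //; case: HP. Qed.
Lemma c1_pos rho y x : sp x y -> 0 < c1 rho y x.
Proof. by move=> /sp_pos [Px Wx]; rewrite /c1 mulr_gt0 ?powR_gt0. Qed.
Lemma c2_ge0 y x : 0 <= c2 y x.
Proof. exact: PW_ge0. Qed.
Lemma c2_pos y x : sp x y -> 0 < c2 y x.
Proof. by []. Qed.

Lemma E0_1 rho : E0 P W (- rho) 0 = - ln (\sum_y (\sum_x c1 rho y x) `^ (1 - rho)).
Proof. by []. Qed.
Lemma E0_2 rho : rho < 1 -> E0 P W (- rho) (- rho) = - ln (\sum_y (\sum_x c2 y x) `^ (1 - rho)).
Proof.
move=> r1; rewrite /E0 divff; last by lra.
congr (- ln _); apply: eq_bigr => y _; congr (_ `^ _); apply: eq_bigr => x _.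
by rewrite powRr1 //; case: (HW x).
Qed.

Definition ysp (y : Y) : bool := [exists x, sp x y].
Definition ee (e : R -> Y -> X -> R) rho y x := if sp x y then e rho y x else 0.
Definition Cy e rho y := \sum_x ee e rho y x.
Definition Uy e rho y := if ysp y then expR ((1 - rho) * ln (Cy e rho y)) else 0.
Definition Sy e rho := \sum_y Uy e rho y.
Definition Tf e rho y := Uy e rho y / Sy e rho.
Definition Vf e rho y x := if ysp y then ee e rho y x / Cy e rho y else P x.

Lemma exists_sp : exists x y, sp x y.
Proof.
case: HP => P0 P1; have [x Px] := exists_pos P1.
case: (HW x) => W0 W1; have [y Wy] := exists_pos W1.
by exists x, y; rewrite /sp mulr_gt0.
Qed.

Lemma exists_ysp : exists y, ysp y.
Proof. by have [x [y h]] := exists_sp; exists y; apply/existsP; exists x. Qed.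

Lemma Lf_ext T V c c' a : feas T V -> (forall y x, sp x y -> c y x = c' y x) ->
  Lf T V c a = Lf T V c' a.
Proof.
move=> F h; apply: G_ext => y x hp.
by have [spx _ _] := feas_sp F hp; rewrite h.
Qed.

Section Tilt.
Variable e : R -> Y -> X -> R.
Hypothesis epos : forall rho y x, sp x y -> 0 < e rho y x.

Lemma ee_ge0 rho y x : 0 <= ee e rho y x.
Proof. by rewrite /ee; case: ifP => // h; apply: ltW; apply: epos. Qed.

Lemma ee_pos rho y x : (0 < ee e rho y x) = sp x y.
Proof. by rewrite /ee; case: ifP => h; [rewrite epos | rewrite ltxx]. Qed.

Lemma Cy_pos rho y : ysp y -> 0 < Cy e rho y.
Proof.
move=> /existsP [x spx]; apply: (@lt_le_trans _ _ (ee e rho y x)).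
  by rewrite ee_pos.
by rewrite /Cy (bigD1 x) //= lerDl sumr_ge0 // => i _; apply: ee_ge0.
Qed.

Lemma Cy_0 rho y : ~~ ysp y -> Cy e rho y = 0.
Proof.
rewrite /ysp negb_exists => /forallP h; apply: big1 => x _.
by rewrite /ee (negbTE (h x)).
Qed.

Lemma Uy_ge0 rho y : 0 <= Uy e rho y.
Proof. by rewrite /Uy; case: ifP => // _; apply: ltW; apply: expR_gt0. Qed.

Lemma Uy_pos rho y : ysp y -> 0 < Uy e rho y.
Proof. by rewrite /Uy => ->; apply: expR_gt0. Qed.

Lemma Sy_pos rho : 0 < Sy e rho.
Proof.
have [y hy] := exists_ysp; apply: (@lt_le_trans _ _ (Uy e rho y)).
  exact: Uy_pos.
by rewrite /Sy (bigD1 y) //= lerDl sumr_ge0 // => i _; apply: Uy_ge0.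
Qed.

Lemma tilt_feas rho : feas (Tf e rho) (Vf e rho).
Proof.
have S0 := Sy_pos rho.
split.
- split; first by move=> y; rewrite /Tf divr_ge0 ?Uy_ge0 // ltW.
  by rewrite /Tf /= -mulr_suml divff // gt_eqF.
- move=> y; case hy: (ysp y); rewrite /Vf hy.
    split; first by move=> x; rewrite divr_ge0 ?ee_ge0 // ltW // Cy_pos.
    by rewrite /= -mulr_suml divff // gt_eqF // Cy_pos.
  exact: HP.
- move=> y x h; rewrite /Tf /Vf; case hy: (ysp y).
    have nsp : ~~ sp x y by rewrite /sp h ltxx.
    by rewrite /ee (negbTE nsp) mul0r mulr0.
  by rewrite /Uy hy mul0r mul0r.
Qed.

Lemma tilt_supp rho y x : (0 < Tf e rho y * Vf e rho y x) = sp x y.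
Proof.
have S0 := Sy_pos rho.
rewrite /Tf /Vf; case hy: (ysp y).
  rewrite (pmulr_rgt0 _ (divr_gt0 (Uy_pos rho y hy) S0)).
  by rewrite pmulr_lgt0 ?invr_gt0 ?Cy_pos // ee_pos.
have nsp : ~~ sp x y.
  by apply: contraFN hy => h; apply/existsP; exists x.
by rewrite /Uy hy mul0r mul0r ltxx (negbTE nsp).
Qed.

Lemma tilt_Lf rho : Lf (Tf e rho) (Vf e rho) (ee e rho) (1 - rho) = - ln (Sy e rho).
Proof.
rewrite /Lf -(G_const _ _ (- ln (Sy e rho)) (tilt_feas rho)).
apply: G_ext => y x; rewrite tilt_supp => spx.
have hy : ysp y by apply/existsP; exists x.
have S0 := Sy_pos rho; have C0 := Cy_pos rho y hy.
have e0 : 0 < ee e rho y x by rewrite ee_pos.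
rewrite /Tf /Vf hy lnD2 ?Uy_pos // /Uy hy expRK.
rewrite -mulrA mulrCA divff ?gt_eqF // mulr1 lnV ?posrE //.
lra.
Qed.

Lemma link (c : Y -> X -> R) rho : rho < 1 ->
  (forall y x, ~~ sp x y -> c y x = 0) -> (forall y x, sp x y -> c y x = e rho y x) ->
  \sum_y (\sum_x c y x) `^ (1 - rho) = Sy e rho.
Proof.
move=> r1 h0 h1; apply: eq_bigr => y _.
have -> : \sum_x c y x = Cy e rho y.
  apply: eq_bigr => x _; rewrite /ee; case: ifP => h; first by rewrite h1.
  by rewrite h0 // h.
rewrite /Uy; case hy: (ysp y).
  by rewrite /powR gt_eqF ?Cy_pos.
rewrite Cy_0 ?hy // powR0 //; apply/eqP; lra.
Qed.

Hypothesis econt : forall r0 y x, r0 < 1 -> sp x y ->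
  {for r0, continuous (fun r : R => e r y x)}.

Lemma cont_ee r0 y x : r0 < 1 -> {for r0, continuous (fun r : R => ee e r y x)}.
Proof. by move=> r1; apply: cont_if => h; apply: econt. Qed.

Lemma cont_Cy r0 y : r0 < 1 -> {for r0, continuous (fun r : R => Cy e r y)}.
Proof. by move=> r1; apply: cont_sum => x; apply: cont_ee. Qed.

Lemma cont_Uy r0 y : r0 < 1 -> {for r0, continuous (fun r : R => Uy e r y)}.
Proof.
move=> r1; apply: cont_if => hy.
apply: (@continuous_comp R R R (fun r : R => (1 - r) * ln (Cy e r y)) (@expR R));
  last exact: continuous_expR.
apply: continuousM.
  apply: continuousB; [exact: cst_continuous | exact: cvg_id].
exact: (@continuous_comp R R R (fun r => Cy e r y) (@ln R) r0 (cont_Cy r0 y r1)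
   (continuous_ln (Cy_pos r0 y hy))).
Qed.

Lemma cont_Sy r0 : r0 < 1 -> {for r0, continuous (fun r : R => Sy e r)}.
Proof. by move=> r1; apply: cont_sum => y; apply: cont_Uy. Qed.

Lemma cont_Tf r0 y : r0 < 1 -> {for r0, continuous (fun r : R => Tf e r y)}.
Proof.
move=> r1; apply: continuousM; first exact: cont_Uy.
apply: continuousV; first by rewrite gt_eqF // Sy_pos.
exact: cont_Sy.
Qed.

Lemma ysp_of {x y} : sp x y -> ysp y.
Proof. by move=> h; apply/existsP; exists x. Qed.

Lemma Vf_pos r y x : sp x y -> 0 < Vf e r y x.
Proof.
move=> h; rewrite /Vf (ysp_of h) divr_gt0 ?ee_pos //.
exact: Cy_pos (ysp_of h).
Qed.

Lemma cont_Vf r0 y x : r0 < 1 -> sp x y -> {for r0, continuous (fun r : R => Vf e r y x)}.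
Proof.
move=> r1 h; apply: (@cont_ext _ (fun r => ee e r y x / Cy e r y)).
  by move=> r; rewrite /Vf (ysp_of h).
apply: continuousM; first exact: cont_ee.
apply: continuousV; first by rewrite gt_eqF // Cy_pos // (ysp_of h).
exact: cont_Cy.
Qed.

Lemma cont_fam r0 (k : Y -> X -> R) : r0 < 1 ->
  {for r0, continuous (fun r : R => \sum_y \sum_x (if sp x y then
     Tf e r y * Vf e r y x * (ln (Vf e r y x / P x) + k y x) else 0))}.
Proof.
move=> r1; apply: cont_sum => y; apply: cont_sum => x; apply: cont_if => h.
have [Px _] := sp_pos h.
apply: continuousM; first (apply: continuousM; [exact: cont_Tf | exact: cont_Vf]).
apply: continuousD; last exact: cst_continuous.
apply: (@continuous_comp R R R (fun r => Vf e r y x / P x) (@ln R)).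
  apply: continuousM; first exact: cont_Vf.
  exact: cst_continuous.
by apply: continuous_ln; rewrite divr_gt0 // Vf_pos.
Qed.

Lemma G_tilt r phi : G (Tf e r) (Vf e r) phi =
  \sum_y \sum_x (if sp x y then Tf e r y * Vf e r y x * phi y x else 0).
Proof. by apply: eq_bigr => y _; apply: eq_bigr => x _; rewrite tilt_supp. Qed.

End Tilt.

Lemma c1_cont r0 y x : r0 < 1 -> sp x y ->
  {for r0, continuous (fun r : R => c1 r y x)}.
Proof.
move=> r1 h; have [Px Wx] := sp_pos h.
apply: (@cont_ext _ (fun r : R => P x * expR ((1 + 0) / (1 + - r) * ln (W x y)))).
  by move=> r; rewrite /c1 /powR gt_eqF.
apply: continuousM; first exact: cst_continuous.
apply: (@continuous_comp R R R (fun r : R => (1 + 0) / (1 + - r) * ln (W x y)) (@expR R));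
  last exact: continuous_expR.
apply: continuousM; last exact: cst_continuous.
apply: continuousM; first exact: cst_continuous.
apply: continuousV; first by apply/eqP; lra.
apply: continuousD; first exact: cst_continuous.
apply: continuousN; exact: cvg_id.
Qed.

Lemma c1_0 rho y x : rho < 1 -> ~~ sp x y -> c1 rho y x = 0.
Proof.
move=> r1 h.
have e0 : P x * W x y = 0.
  by apply/eqP; rewrite eq_le PW_ge0 andbT leNgt.
rewrite /c1; have [->|Px] := eqVneq (P x) 0; first by rewrite mul0r.
have -> : W x y = 0.
  by apply/eqP; move: e0 => /eqP; rewrite mulf_eq0 (negbTE Px).
rewrite powR0 ?mulr0 //; rewrite addr0 div1r invr_eq0; apply/eqP; lra.
Qed.

Lemma c2_0 y x : ~~ sp x y -> c2 y x = 0.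
Proof. by move=> h; apply/eqP; rewrite eq_le PW_ge0 andbT leNgt. Qed.

Section Final.
Variables (Rt K : R).
Hypotheses (Rt0 : 0 < Rt) (K0 : 0 < K).

Definition set1 := [set E0 P W (- rho) 0 + rho * Rt | rho in [set r : R | 0 <= r < 1]].
Definition set2 := [set E0 P W (- rho) (- rho) + rho * (Rt + K) | rho in [set r : R | 0 <= r < 1]].
Definition Fset := [set v : R | exists (T : Y -> R) (V : Y -> X -> R),
         [/\ is_dist T, (forall y, is_dist (V y)),
             (forall y x, P x * W x y = 0 -> T y * V y x = 0) &
             v = divD P W T V + pospart (Rt - A_TV P T V - pospart (B_TV W T V - K))]].

Lemma elem1_le T V rho : feas T V -> 0 <= rho < 1 ->
  E0 P W (- rho) 0 + rho * Rt <= divD P W T V + pospart (Rt - A_TV P T V).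
Proof.
move=> F /andP [r0 r1].
have h1 := @Lf_ge T V (c1 rho) (1 - rho) F (c1_ge0 rho) (c1_pos rho) ltac:(lra).
rewrite -E1 // in h1.
have h2 := pos_scale rho (Rt - A_TV P T V) ltac:(by rewrite r0 ltW).
rewrite E0_1; lra.
Qed.

Lemma elem2_le T V rho : feas T V -> 0 <= rho < 1 ->
  E0 P W (- rho) (- rho) + rho * (Rt + K) <=
  divD P W T V + pospart (Rt + K - (A_TV P T V + B_TV W T V)).
Proof.
move=> F /andP [r0 r1].
have h1 := @Lf_ge T V c2 (1 - rho) F c2_ge0 c2_pos ltac:(lra).
rewrite -E2 // in h1.
have h2 := pos_scale rho (Rt + K - (A_TV P T V + B_TV W T V)) ltac:(by rewrite r0 ltW).
rewrite E0_2 //; lra.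
Qed.

Lemma set1_ne : set1 !=set0.
Proof. by exists (E0 P W (- 0) 0 + 0 * Rt), 0 => //=; rewrite lexx ltr01. Qed.
Lemma set2_ne : set2 !=set0.
Proof. by exists (E0 P W (- 0) (- 0) + 0 * (Rt + K)), 0 => //=; rewrite lexx ltr01. Qed.

Lemma S1_le T V : feas T V -> sup set1 <= divD P W T V + pospart (Rt - A_TV P T V).
Proof. by move=> F; apply: ge_sup set1_ne _ => v [r hr <-]; apply: elem1_le. Qed.
Lemma S2_le T V : feas T V ->
  sup set2 <= divD P W T V + pospart (Rt + K - (A_TV P T V + B_TV W T V)).
Proof. by move=> F; apply: ge_sup set2_ne _ => v [r hr <-]; apply: elem2_le. Qed.

Lemma feas1 : feas (Tf c1 0) (Vf c1 0).
Proof. exact: (@tilt_feas c1 c1_pos 0). Qed.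

Lemma set1_ub : has_ubound set1.
Proof.
by exists (divD P W (Tf c1 0) (Vf c1 0) + pospart (Rt - A_TV P (Tf c1 0) (Vf c1 0)))
  => v [r hr <-]; apply: elem1_le feas1 hr.
Qed.
Lemma set2_ub : has_ubound set2.
Proof.
by exists (divD P W (Tf c1 0) (Vf c1 0) +
   pospart (Rt + K - (A_TV P (Tf c1 0) (Vf c1 0) + B_TV W (Tf c1 0) (Vf c1 0))))
  => v [r hr <-]; apply: elem2_le feas1 hr.
Qed.

Lemma Fset_lb v : Fset v -> Num.min (sup set1) (sup set2) <= v.
Proof.
move=> [T [V [HT HV HC ->]]].
have F : feas T V by split.
case: (leP (B_TV W T V) K) => hB.
  rewrite (@pos_0 _ (B_TV W T V - K)); last by lra.
  rewrite subr0 ge_min; apply/orP; left; exact: S1_le.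
rewrite (@pos_id _ (B_TV W T V - K)); last by lra.
rewrite ge_min; apply/orP; right.
have -> : Rt - A_TV P T V - (B_TV W T V - K) = Rt + K - (A_TV P T V + B_TV W T V) by ring.
exact: S2_le.
Qed.

Lemma Fset_elem T V : feas T V ->
  Fset (divD P W T V + pospart (Rt - A_TV P T V - pospart (B_TV W T V - K))).
Proof. by case=> HT HV HC; exists T, V; split. Qed.

Lemma Fset_ne : Fset !=set0.
Proof. by eexists; apply: Fset_elem feas1. Qed.

Lemma Fset_hlb : has_lbound Fset.
Proof. by exists (Num.min (sup set1) (sup set2)) => v; apply: Fset_lb. Qed.

Lemma inf_le1 : inf Fset <= sup set1.
Proof.
pose Tr r := Tf c1 r; pose Vr r := Vf c1 r.
apply: (@upper R (fun r => divD P W (Tr r) (Vr r)) (fun r => A_TV P (Tr r) (Vr r))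
   (fun r => E0 P W (- r) 0 + r * Rt) Rt (sup set1) Fset) => //.
- exact: Fset_hlb.
- by move=> r hr /=; apply: (ub_le_sup set1_ub); exists r.
- move=> r /andP [r0 r1]; have F := @tilt_feas c1 c1_pos r.
  rewrite /Tr /Vr E1 //.
  rewrite (@Lf_ext _ _ (c1 r) (ee c1 r) _ F); last by move=> y x h; rewrite /ee h.
  rewrite (@tilt_Lf c1 c1_pos r).
  rewrite E0_1 (@link c1 c1_pos (c1 r) r r1) //.
  + by ring.
  + by move=> y x h; apply: c1_0.
- move=> r _; rewrite A_G; apply: (@G_log_ge0 _ _ (fun y x => P x)).
  + exact: (@tilt_feas c1 c1_pos r).
  + by move=> y x; case: HP.
  + by move=> y x /sp_pos [].
  + by move=> y; case: HP => _ ->.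
- move=> r /andP [_ r1].
  apply: (@cont_ext _ (fun r : R => \sum_y \sum_x (if sp x y then
     Tf c1 r y * Vf c1 r y x * (ln (Vf c1 r y x / P x) + (fun _ _ => 0) y x) else 0))).
    move=> r'; rewrite A_G G_tilt; last exact: c1_pos.
    apply: eq_bigr => y _; apply: eq_bigr => x _.
    by rewrite addr0.
  exact: (@cont_fam c1 c1_pos c1_cont r (fun _ _ => 0) r1).
- move=> r _; eexists; first by apply: Fset_elem; apply: (@tilt_feas c1 c1_pos r).
  rewrite lerD2l; apply: pos_mono; have := pos_ge0 (B_TV W (Tr r) (Vr r) - K); lra.
Qed.

Lemma inf_le2 : inf Fset <= sup set2.
Proof.
pose e2 := fun (_ : R) => c2.
have e2pos : forall r y x, sp x y -> 0 < e2 r y x by move=> r y x; apply: c2_pos.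
pose Tr r := Tf e2 r; pose Vr r := Vf e2 r.
have AB : forall r, A_TV P (Tr r) (Vr r) + B_TV W (Tr r) (Vr r) =
    G (Tr r) (Vr r) (fun y x => ln (Vr r y x / P x) + 1 * - ln (W x y)).
  by move=> r; rewrite A_G B_G -(mul1r (G _ _ (fun y x => - ln (W x y)))) G_lin.
apply: (@upper R (fun r => divD P W (Tr r) (Vr r))
   (fun r => A_TV P (Tr r) (Vr r) + B_TV W (Tr r) (Vr r))
   (fun r => E0 P W (- r) (- r) + r * (Rt + K)) (Rt + K) (sup set2) Fset) => //.
- by rewrite addr_gt0.
- exact: Fset_hlb.
- by move=> r hr /=; apply: (ub_le_sup set2_ub); exists r.
- move=> r /andP [r0 r1]; have F := @tilt_feas e2 e2pos r.
  rewrite /Tr /Vr E2 //.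
  rewrite (@Lf_ext _ _ c2 (ee e2 r) _ F); last by move=> y x h; rewrite /ee h.
  rewrite (@tilt_Lf e2 e2pos r).
  rewrite E0_2 // (@link e2 e2pos c2 r r1) //.
  + by ring.
  + by move=> y x h; apply: c2_0.
- move=> r _; rewrite AB.
  have F := @tilt_feas e2 e2pos r.
  rewrite (@G_ext _ _ _ (fun y x => ln (Vr r y x / c2 y x))).
    apply: G_log_ge0 => //; first exact: c2_ge0.
    move=> y; apply: (@le_trans _ _ (\sum_x P x)); last by case: HP => _ ->.
    apply: ler_sum => x _; rewrite /c2 ler_piMr ?W_le1 //; by case: HP.
  move=> y x h; have [spx Ty Vx] := feas_sp F h; have [Px Wx] := sp_pos spx.
  rewrite /c2 lnD2 // lnD2 ?mulr_gt0 // lnM2 //; lra.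
- move=> r /andP [_ r1].
  apply: (@cont_ext _ (fun r : R => \sum_y \sum_x (if sp x y then
     Tf e2 r y * Vf e2 r y x * (ln (Vf e2 r y x / P x) + (fun y x => 1 * - ln (W x y)) y x)
     else 0))).
    by move=> r'; rewrite AB G_tilt.
  apply: (@cont_fam e2 e2pos _ r (fun y x => 1 * - ln (W x y)) r1).
  move=> r0 y x _ _; exact: cst_continuous.
- move=> r _; eexists; first by apply: Fset_elem; apply: (@tilt_feas e2 e2pos r).
  rewrite lerD2l; apply: pos_mono; have := pos_ge (B_TV W (Tr r) (Vr r) - K); lra.
Qed.

Lemma main_eq : inf Fset = Num.min (sup set1) (sup set2).
Proof.
apply/eqP; rewrite eq_le; apply/andP; split.
  by rewrite le_min inf_le1 inf_le2.
by apply: lb_le_inf Fset_ne _ => v; apply: Fset_lb.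
Qed.

End Final.
End Main.

Theorem lemma9 (R : realType) (X Y : finType) (W : X -> Y -> R) (P : X -> R)
  (Rt K : R) :
  (forall x, is_dist (W x)) -> is_dist P -> 0 < Rt -> 0 < K ->
  Ec P W Rt K =
  Num.min
    (sup [set E0 P W (- rho) 0 + rho * Rt | rho in [set r : R | 0 <= r < 1]])
    (sup [set E0 P W (- rho) (- rho) + rho * (Rt + K) | rho in [set r : R | 0 <= r < 1]]).
Proof.
move=> HW HP Rt0 K0.
exact: (@main_eq R X Y P W HW HP Rt K Rt0 K0).
Qed.
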